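(* Let $q>1$ be an integer and $f$ as in the context, and for $\delta\in(0,1]$ let $f_\delta(u)=\frac{f(u)}{1+\sqrt{\delta}|u|^{2q-2}}$. Then there exist constants $\tilde L_f$ and $\tilde l_f$ independent of $\delta$ such that \[ \sup_{u\in\mathbb{R}}f_\delta'(u)\le\tilde L_f,\qquad |f_\delta'(u)|\le\tilde l_f\big(1+(|u|^{2q-2}\wedge\delta^{-1/2})\big)\quad\text{for all }u\in\mathbb{R}. \]
   Context: $f(v)=-c_fv^{2q-1}+f_0(v)$, $v\in\mathbb{R}$, with $c_f>0$ and $f_0:\mathbb{R}\to\mathbb{R}$ twice differentiable satisfying $|f_0(v)|\le c_{f,0}(1+|v|^{2q-2})$ and $|f_0'(v)|+|f_0''(v)|\le c_{f,1}(1+|v|^{2q-3})$ for all $v$, with constants $c_{f,0},c_{f,1}>0$. *)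

(* Defs.v *)
From HB Require Import structures.
From mathcomp Require Import all_boot all_order all_algebra.
From mathcomp Require Import all_classical all_reals all_analysis.
Set Implicit Arguments. Unset Strict Implicit. Unset Printing Implicit Defensive.
Import Order.TTheory GRing.Theory Num.Theory.
Local Open Scope ring_scope.

Definition fnl {R : realType} (q : nat) (cf : R) (f0 : R -> R) (v : R) : R :=
  - cf * v ^+ (2 * q - 1) + f0 v.

Definition fdelta {R : realType} (q : nat) (cf : R) (f0 : R -> R) (delta : R)
  (u : R) : R :=
  fnl q cf f0 u / (1 + Num.sqrt delta * `|u| ^+ (2 * q - 2)).

(* Main.v *)
Require Import Defs.
From HB Require Import structures.
From mathcomp Require Import all_boot all_order all_algebra.
From mathcomp Require Import all_classical all_reals all_analysis.
From mathcomp Require Import ring lra zify.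
Import Order.TTheory GRing.Theory Num.Theory.
Local Open Scope ring_scope.

Lemma alg_bound (R : realType) (a b s K cf c0 c1 fu d0 p M : R) :
  0 <= a -> 0 <= b -> 0 < s -> s <= 1 -> 0 <= K -> 0 < cf -> 0 < c0 -> 0 < c1 ->
  `|p| = b -> `|fu| <= c0 * (1 + a) -> `|d0| <= c1 * (1 + b) ->
  b <= 1 + a ->
  - cf * a + (c1 + c0 * K) * (1 + b) <= M -> 0 <= M ->
  let g := 1 + s * a in
  let N := - cf * a * g - cf * K * a + d0 * g - fu * s * K * p in
  N / g ^+ 2 <= M /\
  `|N / g ^+ 2| <= (cf * (1 + K) + 2 * (c1 + c0 * K)) * (1 + Num.min a s^-1).
Proof.
move=> a0 b0 s0 s1 K0 cf0 c00 c10 pb hfu hd0 ba hM M0 g N.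
have g1 : 1 <= g by rewrite /g; nra.
have g0 : 0 < g by lra.
have key : (1 + a) * s * b <= (1 + b) * g by rewrite /g; nra.
have hfu' : `|fu * s * K * p| <= c0 * K * ((1 + b) * g).
  rewrite !normrM pb (ger0_norm (ltW s0)) (ger0_norm K0).
  have : `|fu| * s * K * b <= c0 * (1 + a) * s * K * b.
    by apply: ler_wpM2r => //; apply: ler_wpM2r => //; apply: ler_wpM2r; lra.
  move=> h; apply: (le_trans h).
  have -> : c0 * (1 + a) * s * K * b = c0 * K * ((1 + a) * s * b) by ring.
  by apply: ler_wpM2l => //; nra.
have hd0' : `|d0 * g| <= c1 * (1 + b) * g.
  by rewrite normrM (ger0_norm (ltW g0)); apply: ler_wpM2r; lra.
have g2 : 0 < g ^+ 2 by rewrite exprn_gt0.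
split.
  rewrite ler_pdivrMr //.
  have h1 : N <= g * (- cf * a + (c1 + c0 * K) * (1 + b)).
    rewrite /N.
    move: hfu' hd0'; set X := fu * s * K * p; set Y := d0 * g.
    move=> h2 h3.
    have h4 : Y <= `|Y| by apply: ler_norm.
    have h5 : - X <= `|X| by rewrite -normrN ler_norm.
    have h6 : 0 <= cf * K * a by rewrite mulr_ge0 // mulr_ge0 // ltW.
    have -> : g * (- cf * a + (c1 + c0 * K) * (1 + b)) =
       - cf * a * g + c1 * (1 + b) * g + c0 * K * ((1 + b) * g) by ring.
    lra.
  apply: (le_trans h1).
  have : g * (- cf * a + (c1 + c0 * K) * (1 + b)) <= g * M by apply: ler_wpM2l; lra.
  move=> h; apply: (le_trans h).
  have h7 : 0 <= g * M * (g - 1) by rewrite mulr_ge0 ?mulr_ge0 //; lra.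
  have -> : M * g ^+ 2 = g * M + g * M * (g - 1) by ring.
  lra.
rewrite normrM normfV (ger0_norm (ltW g2)).
set L := cf * (1 + K) + 2 * (c1 + c0 * K).
have hN : `|N| <= g * (L * (1 + a)).
  rewrite /N; set X := fu * s * K * p; set Y := d0 * g.
  have e1 : `|- cf * a * g - cf * K * a + Y - X| <= cf * a * g + cf * K * a + `|Y| + `|X|.
    apply: (le_trans (ler_normB _ _)); rewrite lerD2r.
    apply: (le_trans (ler_normD _ _)); rewrite lerD2r.
    apply: (le_trans (ler_normB _ _)).
    have -> : `|- cf * a * g| = cf * a * g.
      by rewrite !normrM normrN !ger0_norm // ?ltW.
    have -> : `|cf * K * a| = cf * K * a.
      by rewrite !normrM !ger0_norm // ?ltW.
    by [].
  apply: (le_trans e1).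
  have bb : (1 + b) * g <= 2 * ((1 + a) * g) by rewrite mulrA; apply: ler_wpM2r; lra.
  have h8 : cf * K * a <= cf * K * (a * g).
    by apply: ler_wpM2l; [rewrite mulr_ge0 // ltW | rewrite ler_peMr].
  have -> : g * (L * (1 + a)) = cf * (1 + K) * ((1 + a) * g) + 2 * (c1 + c0 * K) * ((1 + a) * g)
    by rewrite /L; ring.
  have h9 : 0 <= (1 + a) * g by rewrite mulr_ge0 //; lra.
  rewrite -mulrA in hd0'.
  have h10 : c1 * ((1 + b) * g) <= c1 * (2 * ((1 + a) * g)) by apply: ler_wpM2l; lra.
  have h11 : c0 * K * ((1 + b) * g) <= c0 * K * (2 * ((1 + a) * g)) by apply: ler_wpM2l; [rewrite mulr_ge0 // ltW|].
  have h12 : 0 <= cf * g by rewrite mulr_ge0 // ltW.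
  have h13 : 0 <= cf * K * g by rewrite mulr_ge0 // ?mulr_ge0 // ltW.
  lra.
have L0 : 0 <= L by rewrite /L; nra.
have h1 : `|N| / g ^+ 2 <= L * ((1 + a) / g).
  rewrite ler_pdivrMr //.
  have -> : L * ((1 + a) / g) * g ^+ 2 = g * (L * (1 + a)).
    by field; rewrite gt_eqF.
  exact: hN.
apply: (le_trans h1); apply: ler_wpM2l => //.
have h2 : (1 + a) / g <= 1 + a.
  rewrite ler_pdivrMr //.
  have : 0 <= (1 + a) * (g - 1) by rewrite mulr_ge0 //; lra.
  lra.
have h3 : (1 + a) / g <= 1 + s^-1.
  rewrite ler_pdivrMr //.
  have sw : s * s^-1 = 1 by rewrite divff // gt_eqF.
  have -> : (1 + s^-1) * g = 1 + s * a + s^-1 + (s * s^-1) * a by rewrite /g; ring.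
  rewrite sw.
  have : 0 <= s^-1 by rewrite invr_ge0 ltW.
  have : 0 <= s * a by rewrite mulr_ge0 // ltW.
  lra.
by rewrite /Num.min; case: ifP.
Qed.

Lemma deriv_id (R : realType) (cf s J u P fu d0 : R) :
  1 + s * (u * P) != 0 ->
  (- cf * (u * (u * P)) + fu) *
    (- ((1 + s * (u * P)) ^+ 2)^-1 * (0 + s * (J * P * 1)))
  + (1 + s * (u * P))^-1 * (- cf * ((J + 1) * (u * P) * 1) + d0)
  = (- cf * (u * P) * (1 + s * (u * P)) - cf * J * (u * P)
     + d0 * (1 + s * (u * P)) - fu * s * J * P) / (1 + s * (u * P)) ^+ 2.
Proof. by move=> h; field. Qed.

Theorem lemma5p1 (R : realType) (q : nat) (cf cf0 cf1 : R) (f0 : R -> R) :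
  (1 < q)%N -> 0 < cf -> 0 < cf0 -> 0 < cf1 ->
  (forall v : R, derivable f0 v 1) ->
  (forall v : R, derivable (derive1 f0) v 1) ->
  (forall v : R, `|f0 v| <= cf0 * (1 + `|v| ^+ (2 * q - 2))) ->
  (forall v : R, `|derive1 f0 v| + `|derive1 (derive1 f0) v|
                   <= cf1 * (1 + `|v| ^+ (2 * q - 3))) ->
  exists Lt lt : R,
    forall delta : R, 0 < delta <= 1 ->
      forall u : R,
        derive1 (fdelta q cf f0 delta) u <= Lt /\
        `|derive1 (fdelta q cf f0 delta) u|
          <= lt * (1 + Num.min (`|u| ^+ (2 * q - 2)) (Num.sqrt delta)^-1).
Proof.
move=> hq cfp c0p c1p hd _ hf0 hf1.
set j := (2 * q - 3)%N.
have e2 : (2 * q - 2)%N = j.+1 by rewrite /j; lia.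
have e1 : (2 * q - 1)%N = j.+2 by rewrite /j; lia.
have e3 : (2 * q - 2)%N = (2 * (q - 1))%N by lia.
have ev : forall x : R, `|x| ^+ j.+1 = x ^+ j.+1.
  by move=> x; rewrite -e2 e3 !exprM real_normK // num_real.
set K : R := (j.+1)%:R.
have K0 : 0 <= K by rewrite /K.
set C := cf1 + cf0 * K.
have C0 : 0 < C by rewrite /C; nra.
set R1 := 1 + C / cf.
have R10 : 1 <= R1 by rewrite /R1 lerDl divr_ge0 // ltW.
set M := C * (1 + R1 ^+ j).
have M0 : 0 <= M.
  have : 0 <= R1 ^+ j by rewrite exprn_ge0 //; lra.
  move=> h; rewrite /M mulr_ge0 //; lra.
exists M, (cf * (1 + K) + 2 * C).
move=> delta /andP[dl0 dl1] u.
set s := Num.sqrt delta.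
have s0 : 0 < s by rewrite /s sqrtr_gt0.
have s1 : s <= 1 by rewrite /s -sqrtr1 ler_wsqrtr.
have feq : fdelta q cf f0 delta =
    (fun x => (- cf * x ^+ j.+2 + f0 x) * (1 + s * x ^+ j.+1)^-1).
  by apply/funext => x; rewrite /fdelta /fnl e1 e2 ev.
set p := u ^+ j.
set a := u ^+ j.+1.
set g := 1 + s * a.
have ea : a = u * p by rewrite /a /p exprS.
have a0 : 0 <= a by rewrite /a -ev exprn_ge0.
have g1 : 1 <= g by rewrite /g; nra.
have gn0 : g != 0 by rewrite gt_eqF //; lra.
set d0 := 'D_1 f0 u.
set fu := f0 u.
set N := - cf * a * g - cf * K * a + d0 * g - fu * s * K * p.
have hder : is_derive u 1 (fdelta q cf f0 delta) (N / g ^+ 2).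
  rewrite feq.
  have h1 := is_deriveX j.+2 (@is_derive_id _ _ u 1).
  rewrite exprfctE in h1.
  have h2 := is_deriveZ (- cf) h1.
  have h3 := is_deriveD h2 (derivableP (hd u)).
  have k1 := is_deriveX j.+1 (@is_derive_id _ _ u 1).
  rewrite exprfctE in k1.
  have k2 := is_deriveZ s k1.
  have k3 := is_deriveD (is_derive_cst (1 : R) u 1) k2.
  have k4 := is_deriveV _ k3.
  have k5 := is_deriveM h3 (k4 ltac:(rewrite /=; exact: gn0)).
  have k6 : is_derive u 1
      (fun x => (- cf * x ^+ j.+2 + f0 x) / (1 + s * x ^+ j.+1))
      ((- cf * u ^+ j.+2 + f0 u) * (- (g ^+ 2)^-1 * (0 + s * ((j.+1)%:R * u ^+ j * 1)))
       + g^-1 * (- cf * ((j.+2)%:R * u ^+ j.+1 * 1) + d0)) := k5.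
  apply: is_derive_eq k6 _.
  have E1 : u ^+ j.+2 = u * (u * u ^+ j) by rewrite !exprS.
  have E3 : (j.+2)%:R = K + 1 :> R by rewrite /K mulrSr.
  rewrite E1 E3 /N /g ea /p.
  rewrite (exprS u j).
  by apply: deriv_id; rewrite -ea.
have dv : 'D_1 (fdelta q cf f0 delta) u = N / g ^+ 2 by case: hder.
rewrite derive1E dv e2 ev -/a.
have hfu : `|fu| <= cf0 * (1 + a) by rewrite /fu /a -ev -e2; apply: hf0.
set t := `|u|.
set b := t ^+ j.
have b0 : 0 <= b by rewrite /b /t exprn_ge0.
have pb : `|p| = b by rewrite /p normrX.
have hd0 : `|d0| <= cf1 * (1 + b).
  have := hf1 u; rewrite derive1E -/d0.
  have : 0 <= `|derive1 (derive1 f0) u| by [].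
  rewrite /b /t /j; lra.
have at_ : a = t * b by rewrite /a -ev /b /t -exprS.
have t0 : 0 <= t by rewrite /t.
have ba : b <= 1 + a.
  have [t1|t1] := leP t 1.
    have : b <= 1 by rewrite exprn_ile1.
    lra.
  have : b <= t * b by rewrite ler_peMl // ltW.
  lra.
have hM : - cf * a + (cf1 + cf0 * K) * (1 + b) <= M.
  rewrite -/C /M.
  have [tR|tR] := leP t R1.
    have : b <= R1 ^+ j by rewrite lerXn2r // qualifE /=; lra.
    have : 0 <= cf * a by rewrite mulr_ge0 // ltW.
    move=> h1 h2.
    have : C * (1 + b) <= C * (1 + R1 ^+ j) by apply: ler_wpM2l; [exact: ltW | lra].
    lra.
  have hCt : C <= cf * t.
    have : cf * R1 = cf + C by rewrite /R1 mulrDr mulr1 mulrCA divff ?mulr1 // gt_eqF.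
    have : cf * R1 <= cf * t by apply: ler_wpM2l; [exact: ltW | exact: ltW].
    lra.
  have : C * b <= cf * a by rewrite at_ mulrA; apply: ler_wpM2r.
  have : 0 <= C * R1 ^+ j by apply: mulr_ge0; [exact: ltW | apply: exprn_ge0; lra].
  lra.
have := @alg_bound R a b s K cf cf0 cf1 fu d0 p M a0 b0 s0 s1 K0 cfp c0p c1p pb hfu hd0 ba hM M0.
by rewrite /= -/g -/N /C.
Qed.
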